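(* Let $n\ge 3$ and let $\mathcal{H}$ be the associating hypergraph on $M(D_n,2)$. Then its matching polynomial is $$M(\mathcal{H},w)=\sum_{k=0}^{\,n+\lfloor n/3\rfloor} a_k\, w_1^{\,4n-3k}\, w_2^{\,k},$$ where $a_k$ is the number of $k$-matchings of $\mathcal{H}$, and $a_k\neq 0$ for $k=n+\lfloor n/3\rfloor$.
   Context: $D_n=\langle x,y\mid x^n=y^2=1,\ xy=yx^{-1}\rangle$. $M(D_n,2)=\{(g,\alpha): g\in D_n,\ \alpha\in\mathbb{Z}_2\}$ with $(g_1,\alpha_1)\circ(g_2,\alpha_2)=(g_1^{1-\alpha_2} g_2^{(-1)^{\alpha_1}} g_1^{\alpha_2},\ \alpha_1+\alpha_2)$. The associating hypergraph $\mathcal{H}$ has vertex set $M(D_n,2)$ ($4n$ vertices), and a 3-element set $\{a,b,c\}$ of distinct elements is a hyperedge when $(a\circ b)\circ c=a\circ(b\circ c)$. A $k$-matching is a set of $k$ pairwise vertex-disjoint hyperedges. For a 3-uniform hypergraph with vertex set $V$, the matching polynomial is $M(\mathcal{H},w)=\sum_{M} w_1^{|V|-3|M|} w_2^{|M|}$, the sum over all matchings $M$ (including the empty one), where $w_1,w_2$ are indeterminates (weights of unmatched vertices and of matching hyperedges). *)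

(* Defs.v *)
From HB Require Import structures.
From mathcomp Require Import all_boot all_order all_algebra.
From mathcomp Require Import mpoly.
Set Implicit Arguments. Unset Strict Implicit. Unset Printing Implicit Defensive.
Import GRing.Theory.
Local Open Scope ring_scope.

(* The dihedral group D_n = <x,y | x^n = y^2 = 1, xy = yx^-1>, realised concretely:
   the pair (i, a) : 'Z_n * bool stands for x^i y^a  (meaningful for n >= 2). *)
Definition dih (n : nat) : finType := ('Z_n * bool)%type.

Definition dih_one (n : nat) : dih n := (0, false).

(* x^i y^a * x^j y^b = x^(i + (-1)^a j) y^(a+b), since y x^j = x^-j y *)
Definition dih_mul (n : nat) (g h : dih n) : dih n :=
  ((g.1 + (if g.2 then - h.1 else h.1))%R, g.2 (+) h.2).

Definition dih_inv (n : nat) (g : dih n) : dih n :=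
  if g.2 then g else ((- g.1)%R, false).

Definition dih_pow01 (n : nat) (g : dih n) (k : bool) : dih n :=
  if k then g else dih_one n.

Definition dih_powsign (n : nat) (g : dih n) (a : bool) : dih n :=
  if a then dih_inv g else g.

(* M(D_n,2) = D_n x Z_2, with Z_2 represented by bool (addition = xor) *)
Definition MD (n : nat) : finType := (dih n * bool)%type.

(* (g1,a1) o (g2,a2) = (g1^(1-a2) g2^((-1)^a1) g1^a2, a1+a2) *)
Definition MD_op (n : nat) (p q : MD n) : MD n :=
  (dih_mul (dih_mul (dih_pow01 p.1 (~~ q.2)) (dih_powsign q.1 p.2)) (dih_pow01 p.1 q.2),
   p.2 (+) q.2).

Definition assoc_hyperedge (n : nat) (e : {set MD n}) : bool :=
  [exists a : MD n, exists b : MD n, exists c : MD n,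
     [&& a != b, a != c, b != c, e == [set a; b; c] &
         MD_op (MD_op a b) c == MD_op a (MD_op b c)]].

Definition is_matching (n : nat) (M : {set {set MD n}}) : bool :=
  [forall e in M, assoc_hyperedge e] &&
  [forall e in M, forall f in M, (e != f) ==> [disjoint e & f]].

Definition num_matchings (n k : nat) : nat :=
  #|[set M : {set {set MD n}} | is_matching M & #|M| == k]|.

(* Matching polynomial M(H, w) in Z[w1, w2], with w1 = 'X_0 and w2 = 'X_1. *)
Definition matching_poly (n : nat) : {mpoly int[2]} :=
  \sum_(M : {set {set MD n}} | is_matching M)
     ('X_(0 : 'I_2) ^+ (#|MD n| - 3 * #|M|)%N * 'X_(1 : 'I_2) ^+ #|M|).

(* Main.v *)
Require Import Defs.
From HB Require Import structures.
From mathcomp Require Import all_boot all_order all_algebra.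
From mathcomp Require Import mpoly ring.
Set Implicit Arguments. Unset Strict Implicit. Unset Printing Implicit Defensive.
Import GRing.Theory.
Local Open Scope ring_scope.

Lemma assoc_R0 n (x y z : 'Z_n) :
  let a : MD n := ((x,false),false) in let b : MD n := ((y,false),false) in
  let c : MD n := ((z,false),false) in
  MD_op (MD_op a b) c = MD_op a (MD_op b c).
Proof.
rewrite /= /MD_op /dih_mul /dih_pow01 /dih_powsign /dih_inv /dih_one /=.
congr (_,_,_). ring.
Qed.

Lemma assoc_mix n (x y z : 'Z_n) :
  (z - x - y) *+ 2 = 0 ->
  let a : MD n := ((x,false),true) in let b : MD n := ((y,true),false) in
  let c : MD n := ((z,true),true) in
  MD_op (MD_op a b) c = MD_op a (MD_op b c).
Proof.
move=> h.
rewrite /= /MD_op /dih_mul /dih_pow01 /dih_powsign /dih_inv /dih_one /=.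
congr (_,_,_).
apply/eqP; rewrite -subr_eq0.
have -> : 0 + z - (x + y - 0) - (0 - (0 + z - y) + x) = (z - x - y) *+ 2 by ring.
by rewrite h.
Qed.

Definition V n (s a : bool) (i : nat) : MD n := (((i%:R : 'Z_n), s), a).
Definition key n (x : MD n) : bool * bool * nat := (x.1.2, x.2, val x.1.1).

Lemma keyV n s a i : (1 < n)%N -> (i < n)%N -> key (V n s a i) = (s, a, i).
Proof. by move=> n1 lin; rewrite /key /V /= val_Zp_nat // modn_small. Qed.

Lemma disjW (T : finType) (A B : {set T}) :
  (forall x, x \in A -> x \in B -> False) -> [disjoint A & B].
Proof.
move=> H; apply/pred0P => x /=; apply/negbTE/negP => /andP [xa xb].
exact: (H x xa xb).
Qed.

Lemma hyper3 n (a b c : MD n) : a != b -> a != c -> b != c ->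
  MD_op (MD_op a b) c = MD_op a (MD_op b c) -> assoc_hyperedge [set a; b; c].
Proof.
move=> ab ac bc e; apply/existsP; exists a; apply/existsP; exists b;
  apply/existsP; exists c.
by rewrite ab ac bc eqxx e eqxx.
Qed.

Lemma card3 (T : finType) (a b c : T) : a != b -> a != c -> b != c ->
  #|[set a; b; c]| = 3%N.
Proof.
move=> ab ac bc; rewrite -setUA cardsU1 cards2 bc !inE negb_or ab ac.
by [].
Qed.

Definition jf n i := if odd n then i else if (i < n./2)%N then i
  else if (i.+1 < n)%N then i.+1 else n./2.
Definition kf n i := if odd n then (if (i < n./2.+1)%N then 2 * i else 2 * i - n)%N
  else (if (i < n./2)%N then 2 * i else 2 * i - n + 1)%N.

From mathcomp Require Import zify.

Lemma half_spec n : n = (n./2 + n./2 + odd n)%N.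
Proof. by rewrite {1}(esym (odd_double_half n)) -addnn addnC. Qed.

Lemma jf_lt n i : (3 <= n)%N -> (i < n)%N -> (jf n i < n)%N.
Proof.
move=> n3 lin; have := half_spec n; rewrite /jf.
case: (odd n) => /= hn; first by [].
case: ifP => _; first by []. case: ifP => h; lia.
Qed.

Lemma kf_lt n i : (3 <= n)%N -> (i < n)%N -> (kf n i < n)%N.
Proof.
move=> n3 lin; have := half_spec n; rewrite /kf.
case: (odd n) => /= hn; case: ifP => h; lia.
Qed.

Lemma jf_inj n i i' : (3 <= n)%N -> (i < n)%N -> (i' < n)%N -> jf n i = jf n i' -> i = i'.
Proof.
move=> n3 lin lin'; have := half_spec n; rewrite /jf.
case: (odd n) => /= hn; first by [].
case: ifP => h1; case: ifP => h2; try case: ifP => h3; try case: ifP => h4; lia.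
Qed.

Lemma kf_inj n i i' : (3 <= n)%N -> (i < n)%N -> (i' < n)%N -> kf n i = kf n i' -> i = i'.
Proof.
move=> n3 lin lin'; have := half_spec n; rewrite /kf.
case: (odd n) => /= hn; case: ifP => h1; case: ifP => h2; lia.
Qed.

Lemma jk_cond n i : (3 <= n)%N -> (i < n)%N ->
  exists t, (2 * (i + jf n i) = 2 * kf n i + t * n)%N.
Proof.
move=> n3 lin; have := half_spec n; rewrite /jf /kf.
case: (odd n) => /= hn.
  case: ifP => h; [exists 0%N | exists 2%N]; lia.
case: ifP => h; first by exists 0%N; lia.
case: ifP => h'; [exists 2%N | exists 1%N]; lia.
Qed.

Definition eR n i : {set MD n} :=
  [set V n false true i; V n true false (jf n i); V n true true (kf n i)].
Definition e0 n t : {set MD n} :=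
  [set V n false false (3 * t); V n false false (3 * t + 1); V n false false (3 * t + 2)].

Lemma V_neq n s a s' a' i i' : (1 < n)%N -> (i < n)%N -> (i' < n)%N ->
  (s, a, i) != (s', a', i') -> V n s a i != V n s' a' i'.
Proof.
move=> n1 li li' ne; apply/eqP => /(congr1 (@key n)).
by rewrite !keyV // => e; rewrite e eqxx in ne.
Qed.

Lemma eR_hyper n i : (3 <= n)%N -> (i < n)%N -> assoc_hyperedge (eR n i).
Proof.
move=> n3 lin; have n1 : (1 < n)%N by lia.
have jl := jf_lt n3 lin; have kl := kf_lt n3 lin.
apply: hyper3; try by apply: V_neq.
have [t ht] := jk_cond n3 lin.
apply: assoc_mix.
have H : ((2 * (i + jf n i))%:R : 'Z_n) = (2 * kf n i + t * n)%:R by rewrite ht.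
rewrite natrD !natrM pchar_Zp // mulr0 addr0 natrD in H.
have -> : ((kf n i)%:R - (i%:R : 'Z_n) - (jf n i)%:R) *+ 2
   = 2%:R * (kf n i)%:R - 2%:R * (i%:R + (jf n i)%:R) by ring.
by rewrite H subrr.
Qed.

Lemma e0_hyper n t : (3 <= n)%N -> (t < n %/ 3)%N -> assoc_hyperedge (e0 n t).
Proof.
move=> n3 lt; have n1 : (1 < n)%N by lia.
have h3 : (3 * t + 2 < n)%N.
  have := leq_trunc_div n 3. have : (t.+1 <= n %/ 3)%N by []. lia.
apply: hyper3; try (apply: V_neq => //; try lia; apply/eqP; case; lia).
rewrite /V; exact: assoc_R0.
Qed.

Definition Mbig n : {set {set MD n}} :=
  [set eR n (val i) | i : 'I_n] :|: [set e0 n (val t) | t : 'I_(n %/ 3)].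

Lemma keyE n s a i x : (1 < n)%N -> (i < n)%N ->
  x = V n s a i -> key x = (s, a, i).
Proof. by move=> n1 li ->; rewrite keyV. Qed.

Lemma three_lt n t : (t < n %/ 3)%N -> (3 * t + 2 < n)%N.
Proof. move=> lt; have := leq_trunc_div n 3. have : (t.+1 <= n %/ 3)%N by []. lia. Qed.

Lemma mem_eR n i x : (3 <= n)%N -> (i < n)%N -> x \in eR n i ->
  [\/ key x = (false, true, i), key x = (true, false, jf n i) | key x = (true, true, kf n i)].
Proof.
move=> n3 li; have n1 : (1 < n)%N by lia.
rewrite !inE => /orP [/orP [] | ] /eqP ->; rewrite keyV //;
  first [by constructor 1 | by constructor 2 | by constructor 3 | by apply: jf_lt | by apply: kf_lt].
Qed.

Lemma mem_e0 n t x : (3 <= n)%N -> (t < n %/ 3)%N -> x \in e0 n t ->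
  exists2 r, (r < 3)%N & key x = (false, false, 3 * t + r)%N.
Proof.
move=> n3 lt; have n1 : (1 < n)%N by lia. have := three_lt lt => h.
rewrite !inE => /orP [/orP [] | ] /eqP ->; rewrite keyV //; try lia.
- by exists 0%N; rewrite ?addn0.
- by exists 1%N.
- by exists 2%N.
Qed.

Lemma Mbig_matching n : (3 <= n)%N -> is_matching (Mbig n).
Proof.
move=> n3; have n1 : (1 < n)%N by lia.
apply/andP; split.
  apply/forall_inP => e; rewrite inE => /orP [] /imsetP [i _ ->].
    exact: eR_hyper n3 (ltn_ord i).
  exact: e0_hyper n3 (ltn_ord i).
apply/forall_inP => e; rewrite inE => /orP [] /imsetP [i _ ->];
apply/forall_inP => f; rewrite inE => /orP [] /imsetP [i' _ ->];
apply/implyP => ne; apply: disjW => x.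
- have hi : (nat_of_ord i <> nat_of_ord i') by move=> h; rewrite (val_inj h) eqxx in ne.
  move=> /(mem_eR n3 (ltn_ord i)) + /(mem_eR n3 (ltn_ord i')).
  have := @jf_inj n i i' n3 (ltn_ord i) (ltn_ord i').
  have := @kf_inj n i i' n3 (ltn_ord i) (ltn_ord i').
  move=> Hk Hj H1 H2; case: H1 H2 => -> []; case=> //; auto.
- move=> /(mem_eR n3 (ltn_ord i)) H2 /(mem_e0 n3 (ltn_ord i')) [r _ H1].
  by rewrite H1 in H2; case: H2.
- move=> /(mem_e0 n3 (ltn_ord i)) [r _ H1] /(mem_eR n3 (ltn_ord i')).
  by rewrite H1 => -[].
- have hi : (nat_of_ord i <> nat_of_ord i') by move=> h; rewrite (val_inj h) eqxx in ne.
  move=> /(mem_e0 n3 (ltn_ord i)) [r hr H1] /(mem_e0 n3 (ltn_ord i')) [r' hr'].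
  rewrite H1 => -[]. lia.
Qed.

Lemma Mbig_card n : (3 <= n)%N -> #|Mbig n| = (n + n %/ 3)%N.
Proof.
move=> n3; have n1 : (1 < n)%N by lia.
have injR : injective (fun i : 'I_n => eR n (val i)).
  move=> i i' e; apply: ord_inj.
  have : V n false true i \in eR n i' by rewrite -e !inE eqxx.
  move/(mem_eR n3 (ltn_ord i')); rewrite keyV //.
  by case=> // -[].
have inj0 : injective (fun t : 'I_(n %/ 3) => e0 n (val t)).
  move=> i i' e; apply: ord_inj.
  have : V n false false (3 * i) \in e0 n i' by rewrite -e !inE eqxx.
  move/(mem_e0 n3 (ltn_ord i')) => [r hr]; rewrite keyV //; last first.
    by have := three_lt (ltn_ord i); lia.
  case; lia.
have dis : [disjoint [set eR n (val i) | i : 'I_n] & [set e0 n (val t) | t : 'I_(n %/ 3)]].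
  apply: disjW => e /imsetP [i _ ->] /imsetP [t _] e'.
  have : V n false true i \in e0 n t by rewrite -e' !inE eqxx.
  move/(mem_e0 n3 (ltn_ord t)) => [r hr]; rewrite keyV //.
by rewrite /Mbig cardsU (disjoint_setI0 dis) cards0 subn0 !card_imset // !card_ord.
Qed.

Lemma card_MD n : (1 < n)%N -> #|MD n| = (4 * n)%N.
Proof.
move=> n1; rewrite /MD /dih !card_prod card_bool card_ord Zp_cast //; lia.
Qed.

Lemma matching_bound n (M : {set {set MD n}}) : (1 < n)%N -> is_matching M -> (3 * #|M| <= 4 * n)%N.
Proof.
move=> n1 /andP [/forall_inP hy /forall_inP dj].
have tr : trivIset M.
  apply/trivIsetP => A B AM BM ne.
  by have := dj A AM => /forall_inP /(_ B BM) /implyP; apply.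
have : (\sum_(A in M) #|A| = 3 * #|M|)%N.
  rewrite (eq_bigr (fun _ => 3%N)); first by rewrite sum_nat_const mulnC.
  move=> A /hy /existsP [a] /existsP [b] /existsP [c] /and5P [ab ac bc /eqP -> _].
  exact: card3.
move/eqP: tr => -> <-; rewrite -(card_MD n1); exact: max_card.
Qed.

Theorem mainTheorem11 (n : nat) (hn : (3 <= n)%N) :
  matching_poly n =
    \sum_(0 <= k < (n + n %/ 3).+1)
       (num_matchings n k)%:R * ('X_(0 : 'I_2) ^+ (4 * n - 3 * k)%N * 'X_(1 : 'I_2) ^+ k)
  /\ num_matchings n (n + n %/ 3) <> 0%N.
Proof.
have n1 : (1 < n)%N by lia.
split; last first.
  rewrite /num_matchings; apply/eqP; rewrite -lt0n; apply/card_gt0P.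
  by exists (Mbig n); rewrite inE Mbig_matching // Mbig_card // eqxx.
rewrite /matching_poly (partition_big (fun M : {set {set MD n}} => (inord #|M| : 'I_(n + n %/ 3).+1)) xpredT) //.
rewrite big_mkord; apply: eq_bigr => k _.
have bnd : forall M : {set {set MD n}}, is_matching M -> (#|M| < (n + n %/ 3).+1)%N.
  move=> M /(matching_bound n1) h.
  have := leq_trunc_div n 3; have := ltn_pmod n (isT : (0 < 3)%N).
  have := divn_eq n 3. lia.
transitivity (\sum_(M in [set M : {set {set MD n}} | is_matching M & #|M| == k])
   ('X_(0 : 'I_2) ^+ (4 * n - 3 * k)%N * 'X_(1 : 'I_2) ^+ k : {mpoly int[2]})).
  apply: eq_big => M.
    rewrite inE; case hM: (is_matching M) => //=.
    apply/eqP/eqP => [<- | e]; first by rewrite inordK // bnd.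
    by apply: ord_inj; rewrite inordK // bnd.
  move=> /andP [hM /eqP <-]; rewrite inordK ?bnd // card_MD //.
by rewrite sumr_const mulr_natl.
Qed.
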